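(* Let $0<\gamma\le 1/2$, let $(x,z)$ be an optimal extreme point solution of LP-CVRP-MD, run the sampling procedure described in the context, and let $U$ be the set of clients that do not lie on any sampled branching. Then $\mathbb E[\ell(U)] \le e^{-\gamma}\cdot \mathrm{lb}$, where $\ell_v = \frac{2}{k}c(v,R)$, $\ell(S)=\sum_{v\in S}\ell_v$, and $\mathrm{lb}=\ell(C)$.
   Context: Problem: nonempty disjoint finite sets $C$ (clients) and $R$ (depots), $V = C\cup R$, a metric $c$ on $V$, integer capacity $k \ge 3$; $c(v,R):=\min_{r\in R}c(v,r)>0$ for every client $v$. Work in the complete bidirected graph on $V$ (directed edges $(a,b)$ of cost $c(a,b)$); for a vector $y$ on directed edges and $S\subseteq V$, $y(\delta^{in}(S))$, $y(\delta^{out}(S))$ are sums over edges entering/leaving $S$. LP-CVRP-MD has variables $x^r_{v,e}\ge 0$ ($r\in R$, $v\in C$, $e$ a directed edge) and $z^r_{v,u}\ge0$ ($r\in R$, $v\in C$, $u\in V$), objective: minimize $\sum_{r,v,e} c(e)x^r_{v,e}$, constraints: (1) $x^r_v(\delta^{out}(u))$ is $2z^r_{v,v}$ if $u=r$, $0$ if $u=v$, $z^r_{v,u}$ otherwise; (2) $x^r_v(\delta^{in}(u))$ is $0$ if $u=r$, $2z^r_{v,v}$ if $u=v$, $z^r_{v,u}$ otherwise (for all $r\in R,v\in C,u\in V$); (3) $x^r_v(\delta^{in}(S))\ge z^r_{v,u}$ whenever $u\in S\subseteq V\setminus\{r\}$; (4) $\sum_{r\in R}\sum_{v\in C} z^r_{v,u}=1$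 for all $u\in C$; (5) $z^r_{v,u}\le z^r_{v,v}$ for $u,v\in C$; (6) $z^r_{v,u}=0$ if $u,v\in C$ and $c(u,r)>c(v,r)$; (7) $\sum_{u\in C}z^r_{v,u}\le k z^r_{v,v}$. An $r$-branching is a tree rooted at $r$ oriented away from $r$. Sampling procedure: for each $r\in R$, $v\in C$, take $r$-branchings $B_1,B_2,\dots$ (finitely many) with weights $\mu_i\ge0$, $\sum_i\mu_i = 2\gamma z^r_{v,v}$, such that every directed edge $e$ lies in branchings of total weight at most $\gamma x^r_{v,e}$, $v$ lies on every $B_i$, and every client $u\neq v$ lies in branchings of total weight at least $\gamma z^r_{v,u}$ (such a decomposition exists by a theorem of Bang-Jensen, Frank and Jackson). Independently (over all $r,v,i$) include each $B_i$ with probability $\mu_i$. *)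

(* Defs.v *)
From HB Require Import structures.
From mathcomp Require Import all_boot all_order all_algebra.
From mathcomp Require Import reals sequences exp.
Set Implicit Arguments. Unset Strict Implicit. Unset Printing Implicit Defensive.
Import Order.TTheory GRing.Theory Num.Theory.
Local Open Scope ring_scope.

Section CVRPMD.
Variables (R : realType) (Cl Dp : finType).
(* V = C ⊔ R : clients are [inl u], depots are [inr r]. *)
Local Notation V := (Cl + Dp)%type.

Definition edge := {e : V * V | e.1 != e.2}.

Definition ecost (c : V -> V -> R) (e : edge) : R := c (val e).1 (val e).2.

Definition yin (y : edge -> R) (S : {set V}) : R :=
  \sum_(e : edge | ((val e).1 \notin S) && ((val e).2 \in S)) y e.
Definition yout (y : edge -> R) (S : {set V}) : R :=
  \sum_(e : edge | ((val e).1 \in S) && ((val e).2 \notin S)) y e.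

Definition metric (c : V -> V -> R) : Prop :=
  [/\ forall a b, 0 <= c a b, forall a, c a a = 0,
      forall a b, c a b = c b a & forall a b d, c a d <= c a b + c b d].

(* c(v,R) = min_{r in R} c(v,r)  (0 if there is no depot) *)
Definition distR (c : V -> V -> R) (v : Cl) : R :=
  match [pick r : Dp] with
  | Some r0 => \big[Num.min/c (inl v) (inr r0)]_(r : Dp) c (inl v) (inr r)
  | None => 0
  end.

(* LP-CVRP-MD: x r v e = x^r_{v,e},  z r v u = z^r_{v,u} *)
Definition lp_feasible (k : nat) (c : V -> V -> R)
    (x : Dp -> Cl -> edge -> R) (z : Dp -> Cl -> V -> R) : Prop :=
  (forall r v e, 0 <= x r v e) /\
  (forall r v u, 0 <= z r v u) /\
  (forall r v u, yout (x r v) [set u] =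
     if u == inr r then 2 * z r v (inl v)
     else if u == inl v then 0 else z r v u) /\
  (forall r v u, yin (x r v) [set u] =
     if u == inr r then 0
     else if u == inl v then 2 * z r v (inl v) else z r v u) /\
  (forall r v (S : {set V}) u, u \in S -> inr r \notin S ->
     z r v u <= yin (x r v) S) /\
  (* (4) *)
  (forall u : Cl, \sum_(r : Dp) \sum_(v : Cl) z r v (inl u) = 1) /\
  (forall r (u v : Cl), z r v (inl u) <= z r v (inl v)) /\
  (forall r (u v : Cl), c (inl v) (inr r) < c (inl u) (inr r) ->
     z r v (inl u) = 0) /\
  (forall r v, \sum_(u : Cl) z r v (inl u) <= k%:R * z r v (inl v)).

Definition lp_obj (c : V -> V -> R) (x : Dp -> Cl -> edge -> R) : R :=
  \sum_(r : Dp) \sum_(v : Cl) \sum_(e : edge) ecost c e * x r v e.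

Definition lp_optimal k c x z : Prop :=
  lp_feasible k c x z /\
  forall x' z', lp_feasible k c x' z' -> lp_obj c x <= lp_obj c x'.

Definition lp_extreme k c x z : Prop :=
  lp_feasible k c x z /\
  forall x1 z1 x2 z2 (lam : R),
    lp_feasible k c x1 z1 -> lp_feasible k c x2 z2 -> 0 < lam -> lam < 1 ->
    (forall r v e, x r v e = lam * x1 r v e + (1 - lam) * x2 r v e) ->
    (forall r v u, z r v u = lam * z1 r v u + (1 - lam) * z2 r v u) ->
    (forall r v e, x1 r v e = x2 r v e) /\ (forall r v u, z1 r v u = z2 r v u).

(* branchings: an edge set B, vertex set = root plus endpoints *)
Definition bverts (r : V) (B : {set edge}) : {set V} :=
  r |: ([set (val e).1 | e in B] :|: [set (val e).2 | e in B]).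

Definition brel (B : {set edge}) : rel V :=
  fun a b => [exists e in B, val e == (a, b)].

Definition is_branching (r : V) (B : {set edge}) : Prop :=
  (forall e, e \in B -> (val e).2 != r) /\
  (forall w, w \in bverts r B -> w != r ->
     #|[set e in B | (val e).2 == w]| = 1%N) /\
  (forall w, w \in bverts r B -> connect (brel B) r w).

Variables (I : finType) (own : I -> Dp * Cl) (B : I -> {set edge}) (mu : I -> R).
(* all sampled-branching indices i, each belonging to the pair own i = (r,v) *)

Definition on_branch (i : I) (w : V) : bool := w \in bverts (inr (own i).1) (B i).

Definition valid_decomp (gamma : R) (x : Dp -> Cl -> edge -> R)
    (z : Dp -> Cl -> V -> R) : Prop :=
  (forall i, 0 <= mu i) /\
  (forall i, is_branching (inr (own i).1) (B i)) /\
  (forall i, on_branch i (inl (own i).2)) /\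
  (forall r v, \sum_(i | own i == (r, v)) mu i = 2 * gamma * z r v (inl v)) /\
  (forall r v e, \sum_(i | (own i == (r, v)) && (e \in B i)) mu i
                   <= gamma * x r v e) /\
  (forall r v (u : Cl), u != v ->
     gamma * z r v (inl u) <= \sum_(i | (own i == (r, v)) && on_branch i (inl u)) mu i).

Definition uncovered (S : {set I}) : {set Cl} :=
  [set u | [forall i in S, ~~ on_branch i (inl u)]].

(* probability of sampling exactly S under independent inclusion *)
Definition sample_prob (S : {set I}) : R :=
  (\prod_(i in S) mu i) * \prod_(i in ~: S) (1 - mu i).

Definition ell (k : nat) (c : V -> V -> R) (u : Cl) : R := 2 / k%:R * distR c u.
Definition ellS k c (A : {set Cl}) : R := \sum_(u in A) ell k c u.

Definition expected_ell_uncovered k c : R :=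
  \sum_(S : {set I}) sample_prob S * ellS k c (uncovered S).

Definition lb k c : R := ellS k c [set: Cl].

End CVRPMD.

(* Main.v *)
Require Import Defs.
From HB Require Import structures.
From mathcomp Require Import all_boot all_order all_algebra.
From mathcomp Require Import reals sequences exp.
From mathcomp Require Import lra.
Import Order.TTheory GRing.Theory Num.Theory.
Local Open Scope ring_scope.

Lemma prob_none (R : realType) (I : finType) (mu : I -> R) (P : pred I) :
  \sum_(S : {set I}) ((\prod_(i in S) mu i) * \prod_(i in ~: S) (1 - mu i)) *
     (if [forall i in S, ~~ P i] then 1 else 0)
  = \prod_i (if P i then 1 - mu i else 1).
Proof.
transitivity (\prod_i ((if P i then 0 else mu i) + (1 - mu i))); last first.
  by apply: eq_bigr => i _; case: (P i); rewrite ?add0r // addrC subrK.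
rewrite bigA_distr; apply: eq_bigr => S _.
rewrite [RHS](bigID (fun i => i \in S)) /=.
rewrite [X in _ = X * _](eq_bigr (fun i => if P i then 0 else mu i)); last by move=> i ->.
rewrite [X in _ = _ * X](eq_bigr (fun i => 1 - mu i)); last first.
  by move=> i /negbTE ->.
rewrite [X in _ = _ * X](eq_bigl (fun i => i \in ~: S)); last by move=> i; rewrite in_setC.
case: forallP => [H|H].
  rewrite mulr1; congr (_ * _); apply: eq_bigr => i iS.
  by have := H i; rewrite iS /= => /negbTE ->.
rewrite mulr0.
have : [exists i in S, P i].
  apply: contraT => /exists_inPn H'; exfalso; apply: H => j.
  by apply/implyP => jS; exact: H'.
case/exists_inP => i iS Pi.
by rewrite (bigD1 i) //= Pi mul0r mul0r.
Qed.

Theorem lemma4 (R : realType) (Cl Dp : finType) (c : (Cl + Dp)%type -> (Cl + Dp)%type -> R)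
    (k : nat) (gamma : R)
    (x : Dp -> Cl -> edge Cl Dp -> R) (z : Dp -> Cl -> (Cl + Dp)%type -> R)
    (I : finType) (own : I -> Dp * Cl) (B : I -> {set edge Cl Dp}) (mu : I -> R) :
  (0 < #|Cl|)%N -> (0 < #|Dp|)%N -> metric c -> (3 <= k)%N ->
  (forall v : Cl, 0 < distR c v) ->
  0 < gamma -> gamma <= 1 / 2 ->
  lp_optimal k c x z -> lp_extreme k c x z ->
  valid_decomp own B mu gamma x z ->
  expected_ell_uncovered own B mu k c <= expR (- gamma) * lb k c.
Proof.
move=> _ _ _ k3 dpos g0 g12 [[_ [z0 [_ [_ [_ [z4 _]]]]]] _] _.
move=> [mu0 [_ [onb [sumown [_ cov]]]]].
have zle1 : forall r v, z r v (inl v) <= 1.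
  move=> r v; rewrite -(z4 v) (bigD1 r) //= (bigD1 v) //= -addrA lerDl.
  apply: addr_ge0; first by apply: sumr_ge0 => ? _; exact: z0.
  by apply: sumr_ge0 => ? _; apply: sumr_ge0 => ? _; exact: z0.
have mule1 : forall i, mu i <= 1.
  move=> i; case E: (own i) => [r v].
  apply: (@le_trans _ _ (\sum_(j | own j == (r, v)) mu j)).
    by rewrite (bigD1 i) ?E //= lerDl sumr_ge0.
  rewrite sumown; apply: (@le_trans _ _ (z r v (inl v))) => //.
  rewrite -[X in _ <= X]mul1r ler_wpM2r //.
  lra.
have covu : forall u : Cl, gamma <= \sum_(i | on_branch own B i (inl u)) mu i.
  move=> u.
  rewrite (partition_big own predT) //= -(pair_bigA _ (fun r v =>
     \sum_(i | on_branch own B i (inl u) && (own i == (r, v))) mu i)) /=.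
  rewrite -[X in X <= _]mulr1 -(z4 u) mulr_sumr; apply: ler_sum => r _.
  rewrite mulr_sumr; apply: ler_sum => v _.
  have [->|nuv] := eqVneq v u.
    rewrite (eq_bigl (fun i => own i == (r, u))); last first.
      move=> i; case E: (own i == (r, u)); rewrite ?andbF ?andbT //.
      by have := onb i; rewrite (eqP E).
    rewrite sumown; have := z0 r u (inl u); nra.
  rewrite (eq_bigl (fun i => (own i == (r, v)) && on_branch own B i (inl u))).
    by apply: cov; rewrite eq_sym.
  by move=> i; rewrite andbC.
rewrite /expected_ell_uncovered /lb /ellS.
rewrite [X in X <= _](_ : _ = \sum_(u : Cl) ell k c u * \sum_(S : {set I}) sample_prob mu S *
   (if [forall i in S, ~~ on_branch own B i (inl u)] then 1 else 0)); last first.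
  under eq_bigr do rewrite big_mkcond mulr_sumr.
  rewrite exchange_big; apply: eq_bigr => u _; rewrite mulr_sumr.
  apply: eq_bigr => S _; rewrite in_set.
  by case: ifP => _; rewrite ?mulr0 ?mul0r ?mulr1 // mulrC.
under eq_bigr do rewrite /sample_prob prob_none.
rewrite [X in _ * X](eq_bigl xpredT); last by move=> u; rewrite in_setT.
rewrite mulr_sumr; apply: ler_sum => u _; rewrite mulrC ler_wpM2r //.
  rewrite /ell; apply: mulr_ge0; last exact: ltW.
  by apply: divr_ge0; rewrite ?ler0n.
rewrite -big_mkcond /=.
apply: (@le_trans _ _ (\prod_(i | on_branch own B i (inl u)) expR (- mu i))).
  apply: ler_prod => i _; rewrite subr_ge0 mule1 /=.
  by have := expR_ge1Dx (- mu i).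
rewrite -expR_sum ler_expR sumrN lerN2; exact: covu.
Qed.
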